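(* The $\sigma$-finiteness hypothesis in the occupancy equivalence cannot be dropped: (a) there exist an MDP and a policy $\pi$ whose occupancy measure is not $\sigma$-finite for which the ratio $\tilde\pi(a|s)=\mu^\pi_\gamma(s,a)/\mu^\pi_\gamma(s)$ is undetermined; and (b) there exist an MDP and a policy $\pi$ whose occupancy measure is not $\sigma$-finite such that no Markovian policy has the same occupancy measure as $\pi$.
   Context: MDP $m=\langle \mathcal{S},\mathcal{A},p_0,p,r,\gamma\rangle$ with state/action spaces, terminal state $s_f$ (reaching it ends the episode), initial distribution $p_0$, transition kernel $p$, reward $r$, discount $\gamma\in[0,1]$. A policy maps trajectory histories to distributions over actions; Markovian if it depends only on the current state. Occupancy measure: $\mu^\pi_\gamma(\sigma,\alpha)=\mathbb{E}[\sum_{t\ge0}\gamma^t\mathbf{1}(S_t\in\sigma)\mathbf{1}(A_t\in\alpha)]$, $\mu^\pi_\gamma(\sigma)=\mu^\pi_\gamma(\sigma,\mathcal{A})$, with values in $[0,\infty]$. A measure is $\sigma$-finite if the space is a countable union of sets of finite measure. *)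

(* Defs.v *)
From HB Require Import structures.
From mathcomp Require Import all_boot all_order all_algebra.
From mathcomp Require Import boolp classical_sets reals ereal sequences.
Set Implicit Arguments. Unset Strict Implicit. Unset Printing Implicit Defensive.
Import Order.TTheory GRing.Theory Num.Theory.
Local Open Scope classical_set_scope.
Local Open Scope ring_scope.

Record mdp (R : realType) := MDP {
  st : finType;
  act : finType;
  p0 : st -> R;
  trans : st -> act -> st -> R;
  rew : st -> act -> R;
  sf : st;
  gam : R;
  p0_ge0 : forall s, 0 <= p0 s;
  p0_sum : \sum_(s : st) p0 s = 1;
  trans_ge0 : forall s a s', 0 <= trans s a s';
  trans_sum : forall s a, \sum_(s' : st) trans s a s' = 1;
  gam_ge0 : 0 <= gam;
  gam_le1 : gam <= 1 }.
Arguments p0 {R} m.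
Arguments trans {R} m.
Arguments rew {R} m.
Arguments sf {R} m.
Arguments gam {R} m.

(* A (history-dependent) policy: given the past state-action pairs
   h = [(s_0,a_0);...;(s_{t-1},a_{t-1})] and the current state s_t,
   a probability distribution over actions. *)
Record policy (R : realType) (M : mdp R) := Policy {
  pol : seq (st M * act M) -> st M -> act M -> R;
  pol_ge0 : forall h s a, 0 <= pol h s a;
  pol_sum : forall h s, \sum_(a : act M) pol h s a = 1 }.

Definition is_markov (R : realType) (M : mdp R) (pi : policy M) :=
  exists k : st M -> act M -> R, forall h s a, pol pi h s a = k s a.

Definition markov_kernel (R : realType) (M : mdp R) (k : st M -> act M -> R) :=
  (forall s a, 0 <= k s a) /\ (forall s, \sum_(a : act M) k s a = 1).

Section Occupancy.
Variables (R : realType) (M : mdp R) (pi : policy M).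

Definition stseq (h : seq (st M * act M)) (s : st M) : seq (st M) :=
  map fst h ++ [:: s].

(* probability that the trajectory starts with history h, then is in state s,
   and the episode has not ended (no s_i = sf for i < size h) *)
Definition traj_weight (h : seq (st M * act M)) (s : st M) : R :=
  p0 M (nth s (stseq h s) 0) *
  \prod_(i < size h)
    (let x := tnth (in_tuple h) i in
     ((x.1 != sf M)%:R * pol pi (take i h) x.1 x.2 *
      trans M x.1 x.2 (nth s (stseq h s) i.+1))).

(* P(S_t = s, A_t = a, episode not yet ended at time t) *)
Definition occ_t (t : nat) (s : st M) (a : act M) : R :=
  \sum_(h : t.-tuple (st M * act M))
     traj_weight h s * (s != sf M)%:R * pol pi h s a.

Definition occupancy (E : set (st M * act M)) : \bar R :=
  (\sum_(t <oo) ((gam M ^+ t) * \sum_(x : st M * act M | x \in E) occ_t t x.1 x.2)%:E)%E.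

End Occupancy.

(* sigma-finiteness: the whole space is a countable union of sets of finite
   measure (all sets are measurable in the discrete setting) *)
Definition sigma_finite_on (T : Type) (R : realType) (mu : set T -> \bar R) :=
  exists F : nat -> set T, \bigcup_n F n = setT /\ forall n, (mu (F n) < +oo)%E.

(* Main.v *)
Require Import Defs.
From HB Require Import structures.
From mathcomp Require Import all_boot all_order all_algebra.
From mathcomp Require Import boolp classical_sets reals ereal sequences.
From mathcomp Require Import lra.
Import Order.TTheory GRing.Theory Num.Theory.
Local Open Scope classical_set_scope.
Local Open Scope ring_scope.
Set Implicit Arguments. Unset Strict Implicit.
Section Gen.
Variables (R : realType) (M : mdp R) (pi : policy M).

Definition stepf (h : seq (st M * act M)) (s : st M) x0 (i : nat) : R :=
  let x := nth x0 h i in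
  (x.1 != sf M)%:R * pol pi (take i h) x.1 x.2 * trans M x.1 x.2 (nth s (stseq h s) i.+1).

Lemma tw_nat h s x0 : traj_weight pi h s =
  p0 M (nth s (stseq h s) 0) * \prod_(0 <= i < size h) stepf h s x0 i.
Proof.
rewrite /traj_weight big_mkord; congr (_ * _); apply: eq_bigr => i _.
by rewrite /stepf (tnth_nth x0).
Qed.

Lemma tw_rcons h x s : traj_weight pi (rcons h x) s =
  traj_weight pi h x.1 * ((x.1 != sf M)%:R * pol pi h x.1 x.2 * trans M x.1 x.2 s).
Proof.
rewrite !(tw_nat _ _ x) size_rcons big_nat_recr //= -mulrA; congr (_ * _).
  by case: h.
congr (_ * _); last first.
  rewrite /stepf nth_rcons ltnn eqxx -cats1 take_size_cat //.
  by rewrite /stseq map_cat -catA nth_cat size_map ltnNge leqnSn /= subSnn.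
apply: eq_big_nat => i /andP[_ hi].
rewrite /stepf nth_rcons hi -cats1 takel_cat ?(ltnW hi) //.
rewrite /stseq map_cat -catA !nth_cat size_map.
case: ltnP => hi'.
  by rewrite (set_nth_default x.1 s) // size_map.
have e : (i.+1 - size h)%N = 0%N by apply/eqP; rewrite subn_eq0.
by rewrite e.
Qed.

End Gen.
Section Tup.
Variables (V : nmodType) (T : finType) (t : nat).

Lemma theadE n (u : n.+1.-tuple T) : thead u :: behead u = u.
Proof. by case: u => -[|y s] //. Qed.

Definition tf (p : t.-tuple T * T) : t.+1.-tuple T := [tuple of rcons p.1 p.2].
Definition tg (u : t.+1.-tuple T) : t.-tuple T * T :=
  ([tuple of belast (thead u) (behead u)], last (thead u) (behead u)).

Lemma tfK : cancel tf tg.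
Proof.
case=> h x; rewrite /tg /tf /=.
have e : thead [tuple of rcons h x] :: behead [tuple of rcons h x] = rcons h x.
  exact: theadE.
have := lastI (thead [tuple of rcons h x]) (behead [tuple of rcons h x]).
rewrite e => /rcons_inj [e1 e2].
by congr pair; [apply: val_inj; rewrite /= -e1 | rewrite -e2].
Qed.

Lemma tgK : cancel tg tf.
Proof.
move=> u; apply: val_inj; rewrite /tf /tg /= -lastI.
by rewrite theadE.
Qed.

Lemma sum_tupleS (F : t.+1.-tuple T -> V) :
  \sum_(u : t.+1.-tuple T) F u = \sum_(h : t.-tuple T) \sum_(x : T) F (tf (h, x)).
Proof.
rewrite pair_big /= (reindex tf) //.
by exists tg => u _; [exact: tfK | exact: tgK].
Qed.
End Tup.
Lemma series_infty (R : realType) (f : nat -> R) c : 0 < c -> (forall t, c <= f t) ->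
  (\sum_(t <oo) (f t)%:E = +oo)%E.
Proof.
move=> c0 fc.
have ge0 : forall n, (0 <= n)%N -> true -> (0 <= (f n)%:E)%E.
  by move=> n _ _; rewrite lee_fin (le_trans (ltW c0)).
have key : forall k, ((k%:R * c)%:E <= \sum_(t <oo) (f t)%:E)%E.
  move=> k; apply: le_trans (nneseries_lim_ge k ge0).
  rewrite sumEFin lee_fin.
  apply: le_trans (ler_sum _ (fun i _ => fc i)).
  by rewrite sumr_const_nat subn0 mulr_natl.
move: (key 0%N); case: (\sum_(t <oo) (f t)%:E)%E key => // r key _.
have r0 : 0 <= `|r| / c by rewrite divr_ge0 // ltW.
have := archi_boundP r0.
rewrite ltr_pdivrMr // => hb.
have := key (Num.bound (`|r| / c)); rewrite lee_fin => h.
have := lt_le_trans (le_lt_trans (ler_norm r) hb) h.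
by rewrite ltxx.
Qed.
Section Ex.
Variable R : realType.

Definition Mb : mdp R.
refine (@MDP R bool bool (fun s => (s == false)%:R) (fun _ _ s' => (s' == false)%:R)
  (fun _ _ => 0) true 1 _ _ _ _ _ _).
- by move=> s; exact: ler0n.
- by rewrite big_bool /= add0r.
- by move=> *; exact: ler0n.
- by move=> *; rewrite big_bool /= add0r.
- exact: ler01.
- exact: lexx.
Defined.

Lemma Mb_sf : sf Mb = true. Proof. by []. Qed.
Lemma Mb_p0 s : p0 Mb s = (s == false)%:R. Proof. by []. Qed.
Lemma Mb_trans s a s' : trans Mb s a s' = (s' == false)%:R. Proof. by []. Qed.
Lemma Mb_gam : gam Mb = 1. Proof. by []. Qed.

Lemma sum_tuple0 (T : finType) (F : 0.-tuple T -> R) : \sum_(h : 0.-tuple T) F h = F [tuple].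
Proof.
rewrite (eq_bigl (pred1 [tuple])) ?big_pred1_eq // => u.
by apply/esym/eqP; apply: tuple0.
Qed.
Lemma Zt (pi : policy Mb) t s :
  \sum_(h : t.-tuple (bool * bool)) traj_weight pi h s = (s == false)%:R.
Proof.
elim: t s => [|t IH] s.
  by rewrite sum_tuple0 /traj_weight /= big_ord0 mulr1.
rewrite sum_tupleS.
under eq_bigr => h _.
  under eq_bigr => x _ do rewrite tw_rcons Mb_sf Mb_trans.
  rewrite -(pair_bigA _ (fun a b => traj_weight pi h a *
       ((a != true)%:R * pol pi h a b * (s == false)%:R))) /=.
  under eq_bigr => a _.
    rewrite -mulr_sumr.
    under eq_bigr => b _ do rewrite mulrAC.
    have ps : \sum_(b : bool) pol pi h a b = 1 := pol_sum pi h a.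
    rewrite -mulr_sumr ps mulr1.
    over.
  rewrite big_bool /= !mul0r mulr0 add0r mul1r.
  over.
by rewrite -mulr_suml IH mul1r.
Qed.

Section Occ.
Variables (pi : policy Mb) (g : nat -> bool -> bool -> R).
Hypothesis pig : forall h s a, pol pi h s a = g (size h) s a.
Hypothesis g0 : forall t s a, 0 <= g t s a.

Lemma occ_tE t s a : occ_t pi t s a = (s == false)%:R * g t s a.
Proof.
rewrite /occ_t.
under eq_bigr => h _ do rewrite pig size_tuple Mb_sf.
by rewrite -!mulr_suml Zt; case: s => /=; rewrite ?mulr0 ?mul0r ?mulr1.
Qed.

Lemma occE E : occupancy pi E =
  (\sum_(t <oo) (\sum_(x : bool * bool | x \in E) (x.1 == false)%:R * g t x.1 x.2)%:E)%E.
Proof.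
rewrite /occupancy; apply: eq_eseriesr => t _.
rewrite Mb_gam expr1n mul1r; congr EFin; apply: eq_bigr => x _.
by rewrite occ_tE.
Qed.

Lemma occ_infty E a c : 0 < c -> (forall t, c <= g t false a) -> E (false, a) ->
  occupancy pi E = +oo%E.
Proof.
move=> c0 hc Ea; rewrite occE; apply: (series_infty c0) => t.
rewrite (bigD1 (false, a)) /=; last exact: mem_set.
apply: le_trans (hc t) _; rewrite mul1r lerDl sumr_ge0 // => x _.
by rewrite mulr_ge0.
Qed.

Lemma occ_zero E : (forall x, E x -> x.1 = true) -> occupancy pi E = 0%E.
Proof.
move=> hE; rewrite occE; apply: eseries0 => t _ _.
rewrite big1 // => x /set_mem /hE ->.
by rewrite mul0r.
Qed.

Lemma occ_not_sf a c : 0 < c -> (forall t, c <= g t false a) ->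
  ~ sigma_finite_on (occupancy pi).
Proof.
move=> c0 hc [F [cov fin]].
have : (\bigcup_n F n) (false, a) by rewrite cov.
case=> n _ Fn.
have := fin n; rewrite (occ_infty c0 hc Fn).
by rewrite ltxx.
Qed.

Lemma set1E (s a : bool) x : (x \in [set (s, a)]) = (x == (s, a)).
Proof.
by apply/idP/eqP => [/set_mem -> | ->] //; exact: mem_set.
Qed.

Lemma occ1E s a : occupancy pi [set (s, a)] =
  (\sum_(t <oo) ((s == false)%:R * g t s a)%:E)%E.
Proof.
rewrite occE; apply: eq_eseriesr => t _; congr EFin.
by rewrite (eq_bigl (pred1 (s, a))) ?big_pred1_eq // => x; rewrite set1E.
Qed.
End Occ.


Definition gA (t : nat) (s a : bool) : R := 2^-1.

Definition piA : policy Mb.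
refine (@Policy R Mb (fun _ _ _ => 2^-1) _ _).
- by move=> *; rewrite invr_ge0 ler0n.
- by move=> h s; rewrite big_bool /=; lra.
Defined.

Definition gB (t : nat) (s a : bool) : R := if t == 0%N then 2^-1 else a%:R.

Definition piB : policy Mb.
refine (@Policy R Mb (fun h s a => gB (size h) s a) _ _).
- by move=> h s a; rewrite /gB; case: (_ == _); [rewrite invr_ge0 ler0n | exact: ler0n].
- by move=> h s; rewrite big_bool /= /gB; case: (_ == _) => /=; lra.
Defined.

Lemma partA : exists (M : mdp R) (pi : policy M),
     ~ sigma_finite_on (occupancy pi) /\
     exists k1 k2 : st M -> act M -> R,
       markov_kernel k1 /\ markov_kernel k2 /\
       (forall s a, occupancy pi [set (s, a)] =
                    (occupancy pi ([set s] `*` setT) * (k1 s a)%:E)%E) /\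
       (forall s a, occupancy pi [set (s, a)] =
                    (occupancy pi ([set s] `*` setT) * (k2 s a)%:E)%E) /\
       exists s a, occupancy pi ([set s] `*` setT) <> 0%E /\ k1 s a <> k2 s a.
Proof.
have pig : forall h s a, pol piA h s a = gA (size h) s a by [].
have g0 : forall (t : nat) (s a : bool), 0 <= gA t s a.
  by move=> *; rewrite /gA invr_ge0 ler0n.
have c0 : 0 < (2:R)^-1 by rewrite invr_gt0 ltr0n.
have hc : forall t, (2:R)^-1 <= gA t false true by move=> t; by rewrite /gA.
exists Mb, piA; split; first exact: (occ_not_sf pig g0 c0 hc).
have keq : forall k : bool -> bool -> R, (forall s a, 0 < k s a) ->
  forall s a, occupancy piA [set (s, a)] =
    (occupancy piA ([set s] `*` setT) * (k s a)%:E)%E.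
  move=> k kp [] a.
    rewrite !(occ_zero pig) ?mul0e // => x /=; first by case=> /= ->.
    by move=> ->.
  have hc' : forall t, (2:R)^-1 <= gA t false a by move=> t; by rewrite /gA.
  rewrite !(occ_infty pig g0 c0 hc') //= gt0_mulye // lte_fin //.
pose k1 := fun (_ : bool) (a : bool) => if a then (4:R)^-1 else 1 - 4^-1.
pose k2 := fun (_ : bool) (a : bool) => if a then 1 - (4:R)^-1 else 4^-1.
have k1p : forall s a, 0 < k1 s a by move=> s []; rewrite /k1; lra.
have k2p : forall s a, 0 < k2 s a by move=> s []; rewrite /k2; lra.
exists k1, k2; split.
  split; first by move=> s a; exact: ltW.
  by move=> s; rewrite big_bool /k1 /=; lra.
split.
  split; first by move=> s a; exact: ltW.
  by move=> s; rewrite big_bool /k2 /=; lra.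
split; first exact: keq.
split; first exact: keq.
exists false, true; split; last by rewrite /k1 /k2 /=; lra.
have hc' : forall t, (2:R)^-1 <= gA t false true by move=> t; by rewrite /gA.
by rewrite (occ_infty pig g0 c0 hc').
Qed.

Lemma partB : exists (M : mdp R) (pi : policy M),
     ~ sigma_finite_on (occupancy pi) /\
     ~ exists pi' : policy M, is_markov pi' /\ occupancy pi' = occupancy pi.
Proof.
have pig : forall h s a, pol piB h s a = gB (size h) s a by [].
have g0 : forall (t : nat) (s a : bool), 0 <= gB t s a.
  by move=> t s a; rewrite /gB; case: (_ == _); [rewrite invr_ge0 ler0n | exact: ler0n].
have c0 : 0 < (2:R)^-1 by rewrite invr_gt0 ltr0n.
have hc : forall t, (2:R)^-1 <= gB t false true.
  by move=> t; rewrite /gB; case: (_ == _) => //=; lra.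
exists Mb, piB; split; first exact: (occ_not_sf pig g0 c0 hc).
have vB : occupancy piB [set (false, false)] = ((2:R)^-1)%:E.
  rewrite (occ1E pig) nneseries_recl //; last first.
    by move=> k _; rewrite lee_fin mulr_ge0.
  rewrite eseries0 ?adde0 /= /gB ?mul1r // => i i1 _.
  by case: i i1 => // i _ /=; rewrite mul1r.
move=> [pi' [[k hk] eqo]].
have pig' : forall h s a, pol pi' h s a = (fun _ => k) (size h) s a by move=> *; exact: hk.
have g0' : forall (t : nat) (s a : bool), 0 <= (fun _ => k) t s a.
  by move=> t s a /=; rewrite -(hk [::]) pol_ge0.
have := congr1 (fun f => f [set (false, false)]) eqo => /=.
rewrite vB (@occ1E _ (fun _ => k) pig') /= mul1r.
have [k0|kp] := eqVneq (k false false) 0.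
  rewrite eseries0 // => [|i _ _]; last by rewrite k0.
  by move/eqP; rewrite eq_sym eqe invr_eq0 pnatr_eq0.
have kpos : 0 < k false false by rewrite lt_def kp /= -(hk [::]) pol_ge0.
by rewrite (series_infty kpos) // => t; exact: lexx.
Qed.

End Ex.

Theorem proposition2 (R : realType) :
  (exists (M : mdp R) (pi : policy M),
     ~ sigma_finite_on (occupancy pi) /\
     exists k1 k2 : st M -> act M -> R,
       markov_kernel k1 /\ markov_kernel k2 /\
       (forall s a, occupancy pi [set (s, a)] =
                    (occupancy pi ([set s] `*` setT) * (k1 s a)%:E)%E) /\
       (forall s a, occupancy pi [set (s, a)] =
                    (occupancy pi ([set s] `*` setT) * (k2 s a)%:E)%E) /\
       exists s a, occupancy pi ([set s] `*` setT) <> 0%E /\ k1 s a <> k2 s a) /\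
  (exists (M : mdp R) (pi : policy M),
     ~ sigma_finite_on (occupancy pi) /\
     ~ exists pi' : policy M, is_markov pi' /\ occupancy pi' = occupancy pi).
Proof. split; [exact: partA | exact: partB]. Qed.
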